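(* Let $H$ be a Kekul\'ean hexagonal system. There is a one-to-one correspondence between the maximal hypercubes of $R(H)$ (induced subgraphs isomorphic to some $Q_n$ that are not properly contained in another such induced subgraph) and the Clar covers of $H$ without alternating hexagons.
   Context: A hexagonal system is a 2-connected finite plane graph in which every interior face is a regular hexagon of side length one; its hexagons are the boundaries of its interior faces; it is Kekul\'ean if it has a perfect matching. A Clar cover of $H$ is a spanning subgraph each of whose components is a hexagon of $H$ or a single edge. A Clar cover $C$ has an alternating hexagon if some hexagon of $H$ that is not a component of $C$ has three pairwise disjoint edges that are single-edge components of $C$ (so its edges alternate between single-edge components of $C$ and edges not in $C$). The resonance graph $R(H)$ has the perfect matchings of $H$ as vertices, two adjacent iff their symmetric difference is the edge set of a hexagon of $H$. *)

(* Defs.v *)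
From HB Require Import structures.
From mathcomp Require Import all_boot all_algebra.
From mathcomp Require Import finmap.
Set Implicit Arguments. Unset Strict Implicit. Unset Printing Implicit Defensive.
Import GRing.Theory Num.Theory.
Local Open Scope fset_scope.
Local Open Scope ring_scope.

(* The hexagonal (honeycomb) lattice in its "brick wall" model:
   vertices are Z^2; horizontal edges (x,y)-(x+1,y) always exist,
   vertical edges (x,y)-(x,y+1) exist iff x+y is even.
   Faces (hexagons) are the 2x1 bricks with lower-left corner (x,y), x+y even. *)
Definition vtx := (int * int)%type.
(* (x, y, true) = horizontal edge (x,y)-(x+1,y);
   (x, y, false) = vertical edge (x,y)-(x,y+1). *)
Definition edge := (int * int * bool)%type.
(* a hexagon (lattice cell) is named by its lower-left corner *)
Definition cell := (int * int)%type.

Definition ends (e : edge) : vtx * vtx :=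
  let: (x, y, h) := e in
  if h then ((x, y), (x + 1, y)) else ((x, y), (x, y + 1)).
Definition incident (v : vtx) (e : edge) : bool :=
  (v == (ends e).1) || (v == (ends e).2).
Definition touch (e f : edge) : bool :=
  incident (ends e).1 f || incident (ends e).2 f.

Definition valid_cell (c : cell) : bool := (2 %| c.1 + c.2)%Z.

Definition hex_edges (c : cell) : {fset edge} :=
  let: (x, y) := c in
  [fset (x, y, true); (x + 1, y, true); (x, y + 1, true); (x + 1, y + 1, true);
        (x, y, false); (x + 2, y, false)].
Definition hex_vertices (c : cell) : {fset vtx} :=
  let: (x, y) := c in
  [fset (x, y); (x + 1, y); (x + 2, y); (x, y + 1); (x + 1, y + 1); (x + 2, y + 1)].

Definition cell_adj (c d : cell) : bool := (hex_edges c `&` hex_edges d) != fset0.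

Definition cell_connected_in (P : pred cell) (c d : cell) : Prop :=
  exists p : seq cell, [/\ path cell_adj c p, last c p = d & all P (c :: p)].

(* A hexagonal system, given by its set S of hexagons: a finite nonempty set of
   lattice hexagons, connected (through shared edges), without holes (every
   hexagon not in S is connected outside S to the unbounded region, namely to a
   hexagon lying to the right of all hexagons of S). *)
Definition hexagonal_system (S : {fset cell}) : Prop :=
  [/\ S != fset0,
      {in S, forall c, valid_cell c},
      {in S &, forall c d, cell_connected_in (fun z => z \in S) c d}
    & forall c, valid_cell c -> c \notin S ->
        exists2 d, (forall c', c' \in S -> c'.1 < d.1)
                 & cell_connected_in (fun z => valid_cell z && (z \notin S)) c d].

Definition Hedge (S : {fset cell}) (e : edge) : Prop :=
  exists2 c, c \in S & e \in hex_edges c.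
Definition Hvtx (S : {fset cell}) (v : vtx) : Prop :=
  exists2 c, c \in S & v \in hex_vertices c.

Definition perfect_matching (S : {fset cell}) (M : {fset edge}) : Prop :=
  (forall e, e \in M -> Hedge S e) /\
  (forall v, Hvtx S v -> #|` [fset e in M | incident v e]| = 1%N).

Definition kekulean (S : {fset cell}) : Prop := exists M, perfect_matching S M.

Definition symdiff (A B : {fset edge}) : {fset edge} := (A `\` B) `|` (B `\` A).
Definition res_adj (S : {fset cell}) (M M' : {fset edge}) : Prop :=
  exists2 c, c \in S & symdiff M M' = hex_edges c.

Definition cube_adj n (A B : {set 'I_n}) : bool :=
  #|((A :\: B) :|: (B :\: A))%SET| == 1%N.

Definition hypercube_in (S : {fset cell}) (U : {fset {fset edge}}) : Prop :=
  (forall M, M \in U -> perfect_matching S M) /\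
  exists n (phi : {set 'I_n} -> {fset edge}),
    [/\ injective phi,
        (forall M, M \in U <-> exists A, phi A = M)
      & forall A B, res_adj S (phi A) (phi B) <-> cube_adj A B].

Definition maximal_hypercube (S : {fset cell}) (U : {fset {fset edge}}) : Prop :=
  hypercube_in S U /\ ~ (exists U', hypercube_in S U' /\ U `<` U').

(* Clar covers, represented by their edge sets (spanning subgraphs) *)
Definition single_comp (F : {fset edge}) (e : edge) : Prop :=
  e \in F /\ (forall f, f \in F -> touch e f -> f = e).

Definition hex_comp (S : {fset cell}) (F : {fset edge}) (c : cell) : Prop :=
  [/\ c \in S, hex_edges c `<=` F &
      forall f, f \in F -> (exists2 v, v \in hex_vertices c & incident v f) ->
        f \in hex_edges c].

Definition clar_cover (S : {fset cell}) (F : {fset edge}) : Prop :=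
  [/\ forall e, e \in F -> Hedge S e,
      forall v, Hvtx S v -> exists2 e, e \in F & incident v e
    & forall e, e \in F -> single_comp F e \/ exists2 c, hex_comp S F c & e \in hex_edges c].

Definition alternating_hex (S : {fset cell}) (F : {fset edge}) : Prop :=
  exists c, [/\ c \in S, ~ hex_comp S F c &
    exists e1 e2 e3,
      [/\ e1 \in hex_edges c, e2 \in hex_edges c, e3 \in hex_edges c,
          ~~ touch e1 e2 /\ ~~ touch e1 e3 /\ ~~ touch e2 e3
        & single_comp F e1 /\ single_comp F e2 /\ single_comp F e3]].

(* Main.v *)
Require Import Defs.
From mathcomp Require Import all_boot all_algebra finmap.
From mathcomp Require Import zify.
From Stdlib Require Import ClassicalEpsilon ProofIrrelevance.
Set Implicit Arguments. Unset Strict Implicit. Unset Printing Implicit Defensive.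
Local Open Scope fset_scope.

Definition hE (c : cell) (k : nat) : edge :=
  let x := c.1 in let y := c.2 in
  match (k %% 6)%N with
  | 0 => (x, y, true) | 1 => ((x + 1)%R, y, true) | 2 => ((x + 2)%R, y, false)
  | 3 => ((x + 1)%R, (y + 1)%R, true) | 4 => (x, (y + 1)%R, true) | _ => (x, y, false) end.
Definition hV (c : cell) (k : nat) : vtx :=
  let x := c.1 in let y := c.2 in
  match (k %% 6)%N with
  | 0 => (x, y) | 1 => ((x + 1)%R, y) | 2 => ((x + 2)%R, y)
  | 3 => ((x + 2)%R, (y + 1)%R) | 4 => ((x + 1)%R, (y + 1)%R) | _ => (x, (y + 1)%R) end.

Lemma hE_mod c k : hE c (k %% 6) = hE c k.
Proof. by rewrite /hE modn_mod. Qed.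
Lemma hV_mod c k : hV c (k %% 6) = hV c k.
Proof. by rewrite /hV modn_mod. Qed.

Lemma hexP c e : reflect (exists2 k, k < 6 & e = hE c k) (e \in hex_edges c).
Proof.
case: c => x y; rewrite /hex_edges !inE.
apply: (iffP idP).
  move=> /orP[/orP[/orP[/orP[/orP[/eqP->|/eqP->]|/eqP->]|/eqP->]|/eqP->]|/eqP->];
  [by exists 0|by exists 1|by exists 4|by exists 3|by exists 5|by exists 2].
case=> k; case: k => [|[|[|[|[|[|k]]]]]] // _ ->; rewrite /hE /= ?eqxx ?orbT //.
Qed.

Lemma hex_hE c k : hE c k \in hex_edges c.
Proof. apply/hexP; exists (k %% 6); [by rewrite ltn_mod|by rewrite hE_mod]. Qed.

Lemma hvP c v : reflect (exists2 k, k < 6 & v = hV c k) (v \in hex_vertices c).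
Proof.
case: c => x y; rewrite /hex_vertices !inE.
apply: (iffP idP).
  move=> /orP[/orP[/orP[/orP[/orP[/eqP->|/eqP->]|/eqP->]|/eqP->]|/eqP->]|/eqP->];
  [by exists 0|by exists 1|by exists 2|by exists 5|by exists 4|by exists 3].
case=> k; case: k => [|[|[|[|[|[|k]]]]]] // _ ->; rewrite /hV /= ?eqxx ?orbT //.
Qed.

Lemma hex_hV c k : hV c k \in hex_vertices c.
Proof. apply/hvP; exists (k %% 6); [by rewrite ltn_mod|by rewrite hV_mod]. Qed.

Lemma add11 (x : int) : (x + 1 + 1 = x + 2)%R.
Proof. lia. Qed.

Lemma inc_hE c k v : incident v (hE c k) = (v == hV c k) || (v == hV c k.+1).
Proof.
rewrite -hE_mod -(hV_mod c k) -(hV_mod c k.+1).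
have : k %% 6 < 6 by rewrite ltn_mod.
have -> : (k.+1 %% 6 = (k %% 6).+1 %% 6)%N by rewrite -addn1 -[in RHS]addn1 modnDml.
case: (k %% 6)%N => [|[|[|[|[|[|k']]]]]] // _; rewrite /incident /hE /hV /=;
  rewrite ?add11 //; by rewrite orbC.
Qed.

Lemma hV_inj c i j : i < 6 -> j < 6 -> hV c i = hV c j -> i = j.
Proof.
case: c => x y.
case: i => [|[|[|[|[|[|i]]]]]] //; case: j => [|[|[|[|[|[|j]]]]]] // _ _;
 rewrite /hV /= => /eqP; rewrite xpair_eqE => H; lia.
Qed.

Lemma hE_inj c i j : i < 6 -> j < 6 -> hE c i = hE c j -> i = j.
Proof.
case: c => x y.
case: i => [|[|[|[|[|[|i]]]]]] //; case: j => [|[|[|[|[|[|j]]]]]] // _ _;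
 rewrite /hE /= => /eqP; rewrite !xpair_eqE => H; lia.
Qed.

Lemma hV_eq c i j : (hV c i == hV c j) = (i %% 6 == j %% 6)%N.
Proof.
apply/eqP/eqP; last by move=> H; rewrite -hV_mod H hV_mod.
rewrite -(hV_mod c i) -(hV_mod c j) => /hV_inj; apply; by rewrite ltn_mod.
Qed.
Lemma hE_eq c i j : (hE c i == hE c j) = (i %% 6 == j %% 6)%N.
Proof.
apply/eqP/eqP; last by move=> H; rewrite -hE_mod H hE_mod.
rewrite -(hE_mod c i) -(hE_mod c j) => /hE_inj; apply; by rewrite ltn_mod.
Qed.

(* the other hexagon across edge k *)
Definition opp (c : cell) (k : nat) : cell :=
  let x := c.1 in let y := c.2 in
  match (k %% 6)%N with
  | 0 => ((x - 1)%R, (y - 1)%R) | 1 => ((x + 1)%R, (y - 1)%R) | 2 => ((x + 2)%R, y)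
  | 3 => ((x + 1)%R, (y + 1)%R) | 4 => ((x - 1)%R, (y + 1)%R) | _ => ((x - 2)%R, y) end.

Lemma opp_lem c d k : valid_cell c -> valid_cell d -> k < 6 ->
  hE c k \in hex_edges d -> d = c \/ d = opp c k.
Proof.
move=> Vc Vd Hk /hexP [l Hl H]; move: Vc Vd Hk Hl H.
case: c => x y; case: d => u v; rewrite /valid_cell /=.
case: k => [|[|[|[|[|[|k]]]]]] //; case: l => [|[|[|[|[|[|l]]]]]] // Vc Vd _ _;
 rewrite /hE /opp /= => /eqP; rewrite !xpair_eqE => H;
 first [ left; apply/eqP; rewrite xpair_eqE; lia | right; apply/eqP; rewrite xpair_eqE; lia | exfalso; lia ].
Qed.

Lemma inc_hVE c m k : incident (hV c m) (hE c k) = (m %% 6 == k %% 6)%N || (m %% 6 == k.+1 %% 6)%N.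
Proof. by rewrite inc_hE !hV_eq. Qed.

Lemma opp_inj c i j : i < 6 -> j < 6 -> opp c i = opp c j -> i = j.
Proof.
case: c => x y.
case: i => [|[|[|[|[|[|i]]]]]] //; case: j => [|[|[|[|[|[|j]]]]]] // _ _;
 rewrite /opp /= => /eqP; rewrite !xpair_eqE => H; lia.
Qed.

Lemma hex2 c d e f : valid_cell c -> valid_cell d -> e != f ->
  e \in hex_edges c -> f \in hex_edges c -> e \in hex_edges d -> f \in hex_edges d -> d = c.
Proof.
move=> Vc Vd nef /hexP[i Hi Ei] /hexP[j Hj Ej]; rewrite Ei Ej => Hd1 Hd2.
have [//|E1] := opp_lem Vc Vd Hi Hd1.
have [//|E2] := opp_lem Vc Vd Hj Hd2.
have eij := opp_inj Hi Hj (etrans (esym E1) E2).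
by move: nef; rewrite Ei Ej eij eqxx.
Qed.

Lemma Hvtx_of S e v : Hedge S e -> incident v e -> Hvtx S v.
Proof.
case=> c Sc /hexP[k _ ->]; rewrite inc_hE => /orP[]/eqP->; exists c => //; exact: hex_hV.
Qed.

Lemma pm_uniq S M v e f : perfect_matching S M -> e \in M -> f \in M ->
  incident v e -> incident v f -> e = f.
Proof.
case=> HE HV eM fM ve vf.
have := HV v (Hvtx_of (HE e eM) ve).
move/eqP/cardfs1P=> [x Hx].
have : e \in [fset e in M | incident v e] by rewrite !inE eM ve.
have : f \in [fset e in M | incident v e] by rewrite !inE fM vf.
by rewrite Hx !inE => /eqP -> /eqP ->.
Qed.

Lemma pm_ex S M v : perfect_matching S M -> Hvtx S v -> exists2 e, e \in M & incident v e.
Proof.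
case=> HE HV /HV /eqP/cardfs1P[x Hx].
have : x \in [fset e in M | incident v e] by rewrite Hx inE.
by rewrite !inE => /andP[]; exists x.
Qed.

Lemma pm_edge S M e : perfect_matching S M -> e \in M -> Hedge S e.
Proof. by case=> HE _; apply: HE. Qed.

Lemma pmI S M : (forall e, e \in M -> Hedge S e) ->
  (forall v, Hvtx S v -> exists2 e, e \in M & incident v e) ->
  (forall v e f, e \in M -> f \in M -> incident v e -> incident v f -> e = f) ->
  perfect_matching S M.
Proof.
move=> HE HV HU; split => // v /HV [e eM ve].
apply/eqP/cardfs1P; exists e; apply/fsetP=> f; rewrite !inE.
apply/andP/eqP; first by case=> fM vf; apply: HU fM eM vf ve.
by move=> ->.
Qed.

Lemma symdiffE A B e : (e \in symdiff A B) = ((e \in A) != (e \in B)).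
Proof. rewrite /symdiff !inE; by case: (e \in A); case: (e \in B). Qed.

Definition resonant (S : {fset cell}) (M : {fset edge}) (c : cell) : Prop :=
  c \in S /\ exists b, forall k, (hE c k \in M) = (odd k == b).

Lemma odd_mod6 k : odd (k %% 6) = odd k.
Proof. by rewrite odd_mod. Qed.

Lemma ext6 (P : nat -> Prop) : (forall k, P (k %% 6)%N -> P k) -> (forall k, k < 6 -> P k) -> forall k, P k.
Proof. move=> H1 H2 k; apply: H1; apply: H2; by rewrite ltn_mod. Qed.

Lemma hV_pred c k : hV c (k + 5).+1 = hV c k.
Proof. rewrite -hV_mod; have ->: ((k + 5).+1 = k + 6)%N by lia. by rewrite modnDr hV_mod. Qed.

Lemma inc_hV_pred c k : incident (hV c k) (hE c (k + 5)).
Proof. by rewrite inc_hE hV_pred eqxx orbT. Qed.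
Lemma inc_hV_self c k : incident (hV c k) (hE c k).
Proof. by rewrite inc_hE eqxx. Qed.

Lemma odd_k5 k : odd (k + 5) = ~~ odd k.
Proof. by rewrite oddD /= addbT. Qed.

Lemma res_at S M c v : resonant S M c -> v \in hex_vertices c ->
  exists2 f, f \in M & (f \in hex_edges c) && incident v f.
Proof.
case=> _ [b Hb] /hvP[k _ ->].
case E: (odd k == b).
  by exists (hE c k); rewrite ?Hb ?E // hex_hE inc_hV_self.
exists (hE c (k + 5)); last by rewrite hex_hE inc_hV_pred.
by rewrite Hb odd_k5; move: E; clear; case: (odd k); case: b.
Qed.

Lemma res_edge S M c v f : perfect_matching S M -> resonant S M c -> v \in hex_vertices c ->
  f \in M -> incident v f -> f \in hex_edges c.
Proof.
move=> pmM rM vc fM vf; have [g gM /andP[gc vg]] := res_at rM vc.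
by rewrite (pm_uniq pmM fM gM vf vg).
Qed.

Lemma hex_in_H S c e : c \in S -> e \in hex_edges c -> Hedge S e.
Proof. by move=> Sc ec; exists c. Qed.

Lemma inc_vert c e v : e \in hex_edges c -> incident v e -> v \in hex_vertices c.
Proof. by case/hexP=> k _ ->; rewrite inc_hE => /orP[]/eqP->; apply: hex_hV. Qed.

Lemma hex_at c k e : e \in hex_edges c -> incident (hV c k) e -> e = hE c k \/ e = hE c (k + 5).
Proof.
move=> He Hi; have E5 : hE c (k + 5) = hE c (k %% 6 + 5) by rewrite -hE_mod -[RHS]hE_mod modnDml.
rewrite E5 -(hE_mod c k); move: Hi; rewrite -(hV_mod c k).
have : k %% 6 < 6 by rewrite ltn_mod.
move: (k %% 6)%N => k' Hk'.
case/hexP: He => l Hl ->; rewrite inc_hVE.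
case: l Hl => [|[|[|[|[|[|l]]]]]] // _; case: k' Hk' => [|[|[|[|[|[|k']]]]]] // _ /=; auto.
Qed.

Lemma alt6 (P : nat -> bool) : (forall k, P (k %% 6) = P k) ->
  (forall k, k < 6 -> P k != P k.+1) -> exists b, forall k, P k = (odd k == b).
Proof.
move=> Pm H; exists (~~ P 0); apply: ext6; first by move=> k; rewrite Pm odd_mod6.
move=> k Hk; move: (H 0 isT) (H 1 isT) (H 2 isT) (H 3 isT) (H 4 isT).
case: k Hk => [|[|[|[|[|[|k]]]]]] // _;
move: (P 0) (P 1) (P 2) (P 3) (P 4) (P 5) => [] [] [] [] [] [] //.
Qed.

Lemma res_uniq_hex S X c k e f : resonant S X c -> e \in X -> f \in X ->
  e \in hex_edges c -> f \in hex_edges c -> incident (hV c k) e -> incident (hV c k) f -> e = f.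
Proof.
case=> _ [b Hb] eX fX ec fc ve vf.
case: (hex_at ec ve) => Ee; case: (hex_at fc vf) => Ef; rewrite Ee Ef //; exfalso;
 by move: eX fX; rewrite Ee Ef !Hb odd_k5; clear; case: (odd k); case: b.
Qed.

Lemma R2 S M M' c : perfect_matching S M -> perfect_matching S M' ->
  symdiff M M' = hex_edges c -> c \in S -> resonant S M c.
Proof.
move=> pM pM' E Sc; split => //.
apply: (alt6 (P := fun k => hE c k \in M)); first by move=> k; rewrite hE_mod.
move=> k _.
have h1 : hE c k \in symdiff M M' by rewrite E hex_hE.
have h2 : hE c k.+1 \in symdiff M M' by rewrite E hex_hE.
rewrite symdiffE in h1; rewrite symdiffE in h2.
have v1 : incident (hV c k.+1) (hE c k) by rewrite inc_hE eqxx orbT.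
have v2 : incident (hV c k.+1) (hE c k.+1) by rewrite inc_hE eqxx.
have neq : hE c k != hE c k.+1.
  rewrite hE_eq; lia.
apply/negP => /eqP Heq.
case E1: (hE c k \in M).
  have E2 : hE c k.+1 \in M by rewrite -Heq.
  by move: neq; rewrite (pm_uniq pM E1 E2 v1 v2) eqxx.
have E2 : hE c k.+1 \in M = false by rewrite -Heq.
rewrite E1 in h1; rewrite E2 in h2.
have F1 : hE c k \in M' by move: h1; case: (_ \in M').
have F2 : hE c k.+1 \in M' by move: h2; case: (_ \in M').
by move: neq; rewrite (pm_uniq pM' F1 F2 v1 v2) eqxx.
Qed.

Lemma res_flip S M c : resonant S M c -> resonant S (symdiff M (hex_edges c)) c.
Proof.
case=> Sc [b Hb]; split => //; exists (~~ b) => k.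
by rewrite symdiffE Hb hex_hE; clear; case: (odd k); case: b.
Qed.

Lemma R1 S M c : perfect_matching S M -> resonant S M c ->
  perfect_matching S (symdiff M (hex_edges c)).
Proof.
move=> pM rM; have rX := res_flip rM; have Sc := rM.1.
apply: pmI.
- move=> e; rewrite symdiffE; case eM: (e \in M) => /= H; first exact: pm_edge pM eM.
  by move: H; rewrite negbK; apply: hex_in_H.
- move=> v Hv; case vc: (v \in hex_vertices c).
    by have [f fX /andP[_ vf]] := res_at rX vc; exists f.
  have [e eM ve] := pm_ex pM Hv; exists e => //.
  rewrite symdiffE eM; apply/negP => ec; by rewrite (inc_vert ec ve) in vc.
- move=> v e f eX fX ve vf.
  have aux : forall g, g \in symdiff M (hex_edges c) -> g \notin hex_edges c -> g \in M.
    by move=> g; rewrite symdiffE => + /negbTE gc; rewrite gc; case: (g \in M).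
  case ec: (e \in hex_edges c); case fc: (f \in hex_edges c).
  + have /hvP [k _ Ev] := inc_vert ec ve; subst v.
    exact: (res_uniq_hex rX eX fX ec fc ve vf).
  + have fM := aux f fX (negbT fc).
    by rewrite (res_edge pM rM (inc_vert ec ve) fM vf) in fc.
  + have eM := aux e eX (negbT ec).
    by rewrite (res_edge pM rM (inc_vert fc vf) eM ve) in ec.
  + exact: (pm_uniq pM (aux e eX (negbT ec)) (aux f fX (negbT fc)) ve vf).
Qed.

Lemma symdiffC A B : symdiff A B = symdiff B A.
Proof. by apply/fsetP=> e; rewrite !symdiffE eq_sym. Qed.

Lemma hexm M M' c (E : symdiff M M' = hex_edges c) e : (e \in hex_edges c) = ((e \in M) != (e \in M')).
Proof. by rewrite -E symdiffE. Qed.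

Ltac pig := match goal with
| Hp : forall i j, _ -> _ -> is_true (?p i) -> is_true (?p j) -> i = j,
  H1 : is_true (?p ?i), H2 : is_true (?p ?j) |- _ =>
   assert_fails (unify i j); have := Hp i j isT isT H1 H2
end.

Lemma pigeon (pb pc pd : nat -> bool) :
  (forall i j, i < 6 -> j < 6 -> pb i -> pb j -> i = j) ->
  (forall i j, i < 6 -> j < 6 -> pc i -> pc j -> i = j) ->
  (forall i j, i < 6 -> j < 6 -> pd i -> pd j -> i = j) ->
  (forall k, k < 6 -> [|| pb k, pc k | pd k]) -> False.
Proof.
move=> Hb Hc Hd cov.
case/or3P: (cov 0 isT) => h0; case/or3P: (cov 1 isT) => h1;
case/or3P: (cov 2 isT) => h2; case/or3P: (cov 3 isT) => h3; by pig.
Qed.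

Lemma atmost1 (S : {fset cell}) a x : {in S, forall c, valid_cell c} -> a \in S -> x \in S -> x != a ->
  forall i j, i < 6 -> j < 6 -> hE a i \in hex_edges x -> hE a j \in hex_edges x -> i = j.
Proof.
move=> VS Sa Sx nxa i j Hi Hj hi hj; apply/eqP; apply/negPn/negP => nij.
have nE : hE a i != hE a j by rewrite hE_eq !modn_small.
by move: nxa; rewrite (hex2 (VS a Sa) (VS x Sx) nE (hex_hE _ _) (hex_hE _ _) hi hj) eqxx.
Qed.

Lemma eq_sym_ne (T : eqType) (x y : T) : x != y -> y != x.
Proof. by rewrite eq_sym. Qed.

Section Square.
Variables (S : {fset cell}) (VS : {in S, forall c, valid_cell c}).
Variables (M1 M2 M3 M4 : {fset edge}) (a b c d : cell).
Hypotheses (p1 : perfect_matching S M1) (p2 : perfect_matching S M2)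
  (p3 : perfect_matching S M3) (p4 : perfect_matching S M4).
Hypotheses (Ea : symdiff M1 M2 = hex_edges a) (Eb : symdiff M2 M3 = hex_edges b)
  (Ec : symdiff M3 M4 = hex_edges c) (Ed : symdiff M4 M1 = hex_edges d).
Hypotheses (Sa : a \in S) (Sb : b \in S) (Sc : c \in S) (Sd : d \in S).
Hypotheses (n13 : M1 != M3) (n24 : M2 != M4).

Lemma SQ0 : a = c.
Proof.
have xa := hexm Ea; have xb := hexm Eb; have xc := hexm Ec; have xd := hexm Ed.
have nab : b != a.
  apply/eqP=> eab; move/eqP: n13; apply; apply/fsetP=> e.
  move: (xa e) (xb e); rewrite eab => ->; by case: (e \in M1); case: (e \in M2); case: (e \in M3).
have nad : d != a.
  apply/eqP=> eab; move/eqP: n24; apply; apply/fsetP=> e.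
  move: (xa e) (xd e); rewrite eab => ->; by case: (e \in M1); case: (e \in M2); case: (e \in M4).
apply/eqP; rewrite eq_sym; apply/negPn/negP => nca.
apply: (pigeon (pb := fun k => hE a k \in hex_edges b) (pc := fun k => hE a k \in hex_edges c)
               (pd := fun k => hE a k \in hex_edges d)).
- exact: atmost1 VS Sa Sb nab.
- exact: atmost1 VS Sa Sc nca.
- exact: atmost1 VS Sa Sd nad.
move=> k _; have := hex_hE a k; rewrite xa xb xc xd.
by case: (_ \in M1); case: (_ \in M2); case: (_ \in M3); case: (_ \in M4).
Qed.
End Square.

Lemma SQ (S : {fset cell}) (VS : {in S, forall c, valid_cell c}) M1 M2 M3 M4 a b c d :
  perfect_matching S M1 -> perfect_matching S M2 -> perfect_matching S M3 -> perfect_matching S M4 ->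
  symdiff M1 M2 = hex_edges a -> symdiff M2 M3 = hex_edges b ->
  symdiff M3 M4 = hex_edges c -> symdiff M4 M1 = hex_edges d ->
  a \in S -> b \in S -> c \in S -> d \in S -> M1 != M3 -> M2 != M4 ->
  [/\ a = c, b = d & forall v, v \in hex_vertices a -> v \in hex_vertices b -> False].
Proof.
move=> p1 p2 p3 p4 Ea Eb Ec Ed Sa Sb Sc Sd n13 n24.
have ac := SQ0 VS Ea Eb Ec Ed Sa Sb Sc Sd n13 n24.
have bd := SQ0 VS Eb Ec Ed Ea Sb Sc Sd Sa n24 (eq_sym_ne n13).
split=> // v va vb.
have Ea' : symdiff M2 M1 = hex_edges a by rewrite symdiffC.
have Ed' : symdiff M1 M4 = hex_edges b by rewrite symdiffC bd.
have r2a := R2 p2 p1 Ea' Sa; have r2b := R2 p2 p3 Eb Sb.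
have r1a := R2 p1 p2 Ea Sa; have r1b := R2 p1 p4 Ed' Sb.
have [g gM2 /andP[ga vg]] := res_at r2a va.
have [g' gM1 /andP[ga' vg']] := res_at r1a va.
have gb := res_edge p2 r2b vb gM2 vg.
have gb' := res_edge p1 r1b vb gM1 vg'.
have ngg : g != g'.
  apply/eqP=> E; move: ga; by rewrite (hexm Ea g) gM2 E gM1.
have eab := hex2 (VS a Sa) (VS b Sb) ngg ga ga' gb gb'.
move/eqP: n13; apply; apply/fsetP=> e.
move: (hexm Ea e) (hexm Eb e); rewrite eab => ->.
by case: (e \in M1); case: (e \in M2); case: (e \in M3).
Qed.

Lemma exF (T : finType) (P : pred T) : [exists x, P x] = false -> forall x, ~~ P x.
Proof. by move=> H x; apply/negP => Px; move: H; have -> : [exists x, P x] by apply/existsP; exists x. Qed.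

Section Cube.
Variables (S : {fset cell}) (VS : {in S, forall c, valid_cell c}).
Variables (n : nat) (M0 : {fset edge}) (cs : 'I_n -> cell).

Definition inA (A : {set 'I_n}) e := [exists i in A, e \in hex_edges (cs i)].
Definition AllH := [fset e | i in 'I_n, e in hex_edges (cs i)].
Definition phiM (A : {set 'I_n}) := [fset e in M0 `|` AllH | (e \in M0) != inA A e].
Definition good := [/\ perfect_matching S M0, forall i, resonant S M0 (cs i)
  & forall i j, i != j -> forall v, v \in hex_vertices (cs i) -> v \in hex_vertices (cs j) -> False].

Lemma AllHE e : (e \in AllH) = [exists i, e \in hex_edges (cs i)].
Proof.
apply/imfset2P/existsP; first by case=> i _ [e' H ->]; exists i.
by case=> i H; exists i => //; exists e.
Qed.

Lemma inA_AllH A e : inA A e -> e \in AllH.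
Proof. by case/existsP=> i /andP[_ H]; rewrite AllHE; apply/existsP; exists i. Qed.

Lemma phiME A e : (e \in phiM A) = ((e \in M0) != inA A e).
Proof.
rewrite !inE; case eM: (e \in M0) => //=; case iA: (inA A e); rewrite ?andbT ?andbF //.
exact: (inA_AllH iA).
Qed.

Hypothesis G : good.

Lemma pm0 : perfect_matching S M0. Proof. by case: G. Qed.
Lemma res0 i : resonant S M0 (cs i). Proof. by case: G. Qed.
Lemma Scs i : cs i \in S. Proof. by case: (res0 i). Qed.

Lemma vdisj i j v : v \in hex_vertices (cs i) -> v \in hex_vertices (cs j) -> i = j.
Proof.
move=> vi vj; apply/eqP; apply/negPn/negP => nij.
by case: G => _ _ /(_ i j nij v vi vj).
Qed.

Lemma edisj i j e : e \in hex_edges (cs i) -> e \in hex_edges (cs j) -> i = j.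
Proof.
move=> ei ej; have ve : incident (ends e).1 e by rewrite /incident eqxx.
exact: vdisj (inc_vert ei ve) (inc_vert ej ve).
Qed.

Lemma inA_one A i e : e \in hex_edges (cs i) -> inA A e = (i \in A).
Proof.
move=> ei; apply/existsP/idP; last by move=> iA; exists i; rewrite iA.
by case=> j /andP[jA ej]; rewrite (edisj ei ej).
Qed.

Lemma inA_none A e : (forall i, e \notin hex_edges (cs i)) -> inA A e = false.
Proof. move=> H; apply/existsP => -[i /andP[_ ei]]; by move: (H i); rewrite ei. Qed.

Lemma res_phi A i : resonant S (phiM A) (cs i).
Proof.
have [Si [b Hb]] := res0 i; split => //; exists (b (+) (i \in A)) => k.
rewrite phiME Hb (inA_one A (hex_hE _ _)).
by clear; case: (odd k); case: b; case: (i \in A).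
Qed.

Lemma vert_cases v : {i | v \in hex_vertices (cs i)} + (forall i, v \notin hex_vertices (cs i)).
Proof.
case: (pickP (fun i => v \in hex_vertices (cs i))) => [i Hi|H]; first by left; exists i.
by right => i; rewrite H.
Qed.

Lemma G_pm A : perfect_matching S (phiM A).
Proof.
have p0 := pm0.
apply: pmI.
- move=> e; rewrite phiME; case eM: (e \in M0) => /= H; first exact: pm_edge p0 eM.
  have : inA A e by move: H; case: (inA A e).
  rewrite /inA => /existsP [i /andP[_ ei]]; exact: hex_in_H (Scs i) ei.
- move=> v Hv; case: (vert_cases v) => [[i vi]|nv].
    by have [f fX /andP[_ vf]] := res_at (res_phi A i) vi; exists f.
  have [e eM ve] := pm_ex p0 Hv; exists e => //.
  rewrite phiME eM inA_none // => i; apply/negP => ei.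
  by move: (nv i); rewrite (inc_vert ei ve).
- move=> v e f eX fX ve vf.
  case: (vert_cases v) => [[i vi]|nv].
    have inh : forall g, g \in phiM A -> incident v g -> g \in hex_edges (cs i).
      move=> g gX vg; case gj: [exists j, g \in hex_edges (cs j)].
        case/existsP: gj => j gj; by rewrite (vdisj vi (inc_vert gj vg)).
      have gM : g \in M0.
        move: gX; rewrite phiME inA_none; first by case: (g \in M0).
        exact: (exF gj).
      exact: res_edge p0 (res0 i) vi gM vg.
    have /hvP [k _ Ev] := vi; subst v.
    exact: res_uniq_hex (res_phi A i) eX fX (inh e eX ve) (inh f fX vf) ve vf.
  have nh : forall g, incident v g -> forall i, g \notin hex_edges (cs i).
    by move=> g vg i; apply/negP => gi; move: (nv i); rewrite (inc_vert gi vg).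
  have eM : e \in M0 by move: eX; rewrite phiME (inA_none _ (nh e ve)); case: (e \in M0).
  have fM : f \in M0 by move: fX; rewrite phiME (inA_none _ (nh f vf)); case: (f \in M0).
  exact: pm_uniq p0 eM fM ve vf.
Qed.

Lemma G_inj : injective phiM.
Proof.
move=> A B E; apply/setP => i.
have := congr1 (fun X => hE (cs i) 0 \in X) E; rewrite /= !phiME !(inA_one _ (hex_hE _ _)).
by case: (_ \in M0); case: (i \in A); case: (i \in B).
Qed.

Lemma G_sym A B e : (e \in symdiff (phiM A) (phiM B)) = (inA A e != inA B e).
Proof. rewrite symdiffE !phiME; by case: (e \in M0); case: (inA A e); case: (inA B e). Qed.

Lemma G_adj A B : res_adj S (phiM A) (phiM B) <-> cube_adj A B.
Proof.
split.
- case=> d Sd E.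
  have Vd := VS Sd.
  have allin : forall j, j \in ((A :\: B) :|: (B :\: A))%SET -> cs j = d.
    move=> j jD.
    have sub : forall k, hE (cs j) k \in hex_edges d.
      move=> k; rewrite -E G_sym !(inA_one _ (hex_hE _ _)).
      by move: jD; rewrite !inE; case: (j \in A); case: (j \in B).
    apply/esym; apply: (hex2 (VS (Scs j)) Vd (e := hE (cs j) 0) (f := hE (cs j) 1)) => //;
      try exact: hex_hE; by rewrite hE_eq.
  have : hE d 0 \in symdiff (phiM A) (phiM B) by rewrite E hex_hE.
  rewrite G_sym; case hd: [exists j, hE d 0 \in hex_edges (cs j)]; last first.
    by rewrite !inA_none //; exact: (exF hd).
  case/existsP: hd => j hj; rewrite !(inA_one _ hj) => jD.
  have jD' : j \in ((A :\: B) :|: (B :\: A))%SET.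
    by rewrite !inE; move: jD; case: (j \in A); case: (j \in B).
  apply/cards1P; exists j; apply/setP => j'; rewrite inE.
  apply/idP/eqP => [jD2|->//].
  apply: (vdisj (v := hV d 0)); [by rewrite (allin j' jD2) hex_hV | by rewrite (allin j jD') hex_hV].
- move/cards1P => [i Hi].
  have iD : i \in ((A :\: B) :|: (B :\: A))%SET by rewrite Hi inE.
  exists (cs i); first exact: Scs.
  apply/fsetP=> e; rewrite G_sym.
  case he: [exists j, e \in hex_edges (cs j)]; last first.
    rewrite !inA_none; try exact: (exF he).
    by apply/esym/negbTE; exact: (exF he).
  case/existsP: he => j ej; rewrite !(inA_one _ ej).
  have -> : (j \in A) != (j \in B) = (j \in ((A :\: B) :|: (B :\: A))%SET).
    by rewrite !inE; case: (j \in A); case: (j \in B).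
  rewrite Hi inE; apply/eqP/idP => [E|ei]; [by rewrite -E | exact: edisj ej ei].
Qed.

Definition Uof := [fset phiM A | A in {: {set 'I_n}}].

Lemma UofE M : M \in Uof <-> exists A, phiM A = M.
Proof.
split; first by case/imfsetP => A _ ->; exists A.
by case=> A <-; apply/imfsetP; exists A.
Qed.

Lemma G_hyp : hypercube_in S Uof.
Proof.
split; first by move=> M /UofE [A <-]; apply: G_pm.
exists n, phiM; split; [exact: G_inj | exact: UofE | exact: G_adj].
Qed.
End Cube.

Definition pb (P : Prop) : bool := if excluded_middle_informative P then true else false.
Lemma pbP P : reflect P (pb P).
Proof. by rewrite /pb; case: excluded_middle_informative => H; constructor. Qed.

Definition UF (S : {fset cell}) (F : {fset edge}) :=
  [fset M in fpowerset F | pb (perfect_matching S M)].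
Lemma UFE S F M : M \in UF S F <-> M `<=` F /\ perfect_matching S M.
Proof.
rewrite !inE fpowersetE; split; first by case/andP => -> /pbP.
by case=> -> H; apply/pbP.
Qed.

Lemma hexcomp_res S F M c : perfect_matching S M -> M `<=` F -> hex_comp S F c -> resonant S M c.
Proof.
move=> pM MF [Sc cF cl]; split => //.
apply: (alt6 (P := fun k => hE c k \in M)); first by move=> k; rewrite hE_mod.
move=> k _.
have v1 : incident (hV c k.+1) (hE c k) by rewrite inc_hE eqxx orbT.
have v2 : incident (hV c k.+1) (hE c k.+1) by rewrite inc_hE eqxx.
have neq : hE c k != hE c k.+1 by rewrite hE_eq; lia.
have [g gM vg] := pm_ex pM (ex_intro2 _ _ c Sc (hex_hV c k.+1)).
have gc : g \in hex_edges c.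
  apply: cl; first exact: (fsubsetP MF).
  by exists (hV c k.+1) => //; apply: hex_hV.
have Hg : g = hE c k.+1 \/ g = hE c k.
  case: (hex_at gc vg) => ->; [by left | right].
  by rewrite -hE_mod -[RHS]hE_mod; congr hE; lia.
case E1: (hE c k \in M); case E2: (hE c k.+1 \in M) => //.
  by move: neq; rewrite (pm_uniq pM E1 E2 v1 v2) eqxx.
by case: Hg => Eg; move: gM; rewrite Eg ?E1 ?E2.
Qed.

Section Clar.
Variables (S : {fset cell}) (VS : {in S, forall c, valid_cell c}).
Variables (n : nat) (M0 : {fset edge}) (cs : 'I_n -> cell).
Hypothesis G : good S M0 cs.

Definition F_of := M0 `|` AllH cs.

Lemma F_ofE e : (e \in F_of) = (e \in M0) || [exists i, e \in hex_edges (cs i)].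
Proof. by rewrite /F_of inE AllHE. Qed.

Lemma M0_at_hex i v f : v \in hex_vertices (cs i) -> f \in M0 -> incident v f -> f \in hex_edges (cs i).
Proof. move=> vi fM vf; exact: res_edge (pm0 G) (res0 G i) vi fM vf. Qed.

Lemma F_hexcomp i : hex_comp S F_of (cs i).
Proof.
split; first exact: Scs G i.
  by apply/fsubsetP => e ei; rewrite F_ofE; apply/orP; right; apply/existsP; exists i.
move=> f; rewrite F_ofE => /orP[fM|/existsP[j fj]] [v vi vf].
  exact: M0_at_hex vi fM vf.
by rewrite (vdisj G vi (inc_vert fj vf)).
Qed.

Lemma F_clar : clar_cover S F_of.
Proof.
split.
- move=> e; rewrite F_ofE => /orP[eM|/existsP[j ej]]; first exact: pm_edge (pm0 G) eM.
  exact: hex_in_H (Scs G j) ej.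
- move=> v Hv; have [e eM ve] := pm_ex (pm0 G) Hv; exists e => //.
  by rewrite F_ofE eM.
- move=> e eF; case he: [exists i, e \in hex_edges (cs i)].
    by case/existsP: he => i ei; right; exists (cs i) => //; apply: F_hexcomp.
  have eM : e \in M0 by move: eF; rewrite F_ofE he orbF.
  left; split => // f fF tef.
  have [v ve vf] : exists2 v, incident v e & incident v f.
    move: tef; rewrite /touch => /orP[H|H]; [exists (ends e).1|exists (ends e).2] => //;
    by rewrite /incident eqxx ?orbT.
  move: fF; rewrite F_ofE => /orP[fM|/existsP[j fj]].
    exact: pm_uniq (pm0 G) fM eM vf ve.
  have vj := inc_vert fj vf.
  by move: (exF he j); rewrite (M0_at_hex vj eM ve).
Qed.

Lemma F_U M : (M `<=` F_of /\ perfect_matching S M) <-> exists A, phiM M0 cs A = M.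
Proof.
split; last first.
  case=> A <-; split; last exact: G_pm G A.
  by apply/fsubsetP => e; rewrite inE => /andP[].
case=> MF pM.
have rM : forall i, resonant S M (cs i).
  move=> i; exact: hexcomp_res pM MF (F_hexcomp i).
exists [set i | (hE (cs i) 0 \in M) != (hE (cs i) 0 \in M0)].
apply/fsetP => e; rewrite phiME.
case he: [exists i, e \in hex_edges (cs i)].
  case/existsP: he => i ei; rewrite (inA_one G _ ei) inE.
  have [_ [b Hb]] := rM i; have [_ [b0 Hb0]] := res0 G i.
  case/hexP: ei => k _ ->; rewrite !Hb !Hb0.
  by clear; case: (odd k); case: b; case: b0.
rewrite inA_none; last exact: exF he.
have -> : ((e \in M0) != false) = (e \in M0) by case: (e \in M0).
apply/idP/idP => [eM|eM]; last by move: (fsubsetP MF e eM); rewrite F_ofE he orbF.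
have ve : incident (ends e).1 e by rewrite /incident eqxx.
have [f fM vf] := pm_ex pM (Hvtx_of (pm_edge (pm0 G) eM) ve).
move: (fsubsetP MF f fM); rewrite F_ofE => /orP[fM0|/existsP[j fj]].
  by rewrite (pm_uniq (pm0 G) eM fM0 ve vf).
have vj := inc_vert fj vf.
by move: (exF he j); rewrite (M0_at_hex vj eM ve).
Qed.

Lemma UF_Uof : UF S F_of = Uof M0 cs.
Proof.
apply/fsetP => M; apply/idP/idP.
  by move/UFE/F_U/(UofE M0 cs M).
by move/(UofE M0 cs M)/F_U/UFE.
Qed.

Lemma F_cover e : e \in F_of -> exists2 M, M \in Uof M0 cs & e \in M.
Proof.
rewrite F_ofE => /orP[eM|/existsP[i ei]].
  exists (phiM M0 cs set0); first by apply/(UofE M0 cs); exists set0.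
  by rewrite phiME eM; apply/negP => /existsP [i]; rewrite inE.
case eM: (e \in M0).
  exists (phiM M0 cs set0); first by apply/(UofE M0 cs); exists set0.
  by rewrite phiME eM (inA_one G _ ei) inE.
exists (phiM M0 cs [set i]); first by apply/(UofE M0 cs); exists [set i].
by rewrite phiME eM (inA_one G _ ei) inE eqxx.
Qed.
End Clar.

Lemma set_ind n (P : {set 'I_n} -> Prop) : P set0 ->
  (forall (A : {set 'I_n}) i, i \notin A -> P A -> P (i |: A)) -> forall A, P A.
Proof.
move=> H0 HS A; move Hk: #|A| => k; elim: k A Hk => [|k IH] A Hk.
  by move/eqP: Hk; rewrite cards_eq0 => /eqP ->.
have : A != set0 by rewrite -card_gt0 Hk.
case/set0Pn => i iA.
rewrite -(setD1K iA); apply: HS; first by rewrite !inE eqxx.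
apply: IH; move: Hk; rewrite (cardsD1 i A) iA; by case.
Qed.

Lemma cube_add n (X : {set 'I_n}) k : k \notin X -> cube_adj X (k |: X) /\ cube_adj (k |: X) X.
Proof.
move=> kX; have E : forall Y Z : {set 'I_n}, Y = X -> Z = k |: X ->
    ((Y :\: Z) :|: (Z :\: Y))%SET = [set k].
  move=> Y Z -> ->; apply/setP => j; rewrite !inE.
  by case: (j =P k) => [->|]; rewrite ?(negbTE kX) //=; case: (j \in X).
split; first by rewrite /cube_adj (E X (k |: X)) // cards1.
by rewrite /cube_adj (setUC ((k |: X) :\: X)) (E X (k |: X)) // cards1.
Qed.

Section Hyp.
Variables (S : {fset cell}) (VS : {in S, forall c, valid_cell c}).
Variables (U : {fset {fset edge}}) (n : nat) (phi : {set 'I_n} -> {fset edge}).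
Hypotheses (pmU : forall M, M \in U -> perfect_matching S M) (inj : injective phi)
  (memb : forall M, M \in U <-> exists A, phi A = M)
  (adj : forall A B, res_adj S (phi A) (phi B) <-> cube_adj A B).

Lemma pmphi A : perfect_matching S (phi A).
Proof. apply: pmU; apply/memb; by exists A. Qed.

Lemma csex i : {c | c \in S /\ symdiff (phi set0) (phi (i |: set0)) = hex_edges c}.
Proof.
apply: constructive_indefinite_description.
have [H _] := cube_add (negbT (in_set0 i)).
by case/adj: H => c Sc E; exists c.
Qed.

Definition csH i := proj1_sig (csex i).
Lemma csH_S i : csH i \in S. Proof. by case: (proj2_sig (csex i)). Qed.
Lemma csH_E i : symdiff (phi set0) (phi (i |: set0)) = hex_edges (csH i).
Proof. by case: (proj2_sig (csex i)). Qed.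

Lemma adjE X Y : cube_adj X Y -> exists2 c, c \in S & symdiff (phi X) (phi Y) = hex_edges c.
Proof. by case/adj => c Sc E; exists c. Qed.

Lemma Kstep : forall A : {set 'I_n}, forall i, i \notin A -> symdiff (phi A) (phi (i |: A)) = hex_edges (csH i).
Proof.
apply: set_ind; first by move=> i _; apply: csH_E.
move=> A j jA IH i iA.
have ij : i != j by apply/eqP => E; move: iA; rewrite E !inE eqxx.
have iA' : i \notin A by move: iA; rewrite !inE negb_or => /andP[].
have jiA : j \notin i |: A by rewrite !inE negb_or eq_sym ij.
have Ea := IH i iA'.
have [c2 S2 Eb] := adjE (cube_add jiA).1.
have ijA : i \notin j |: A by rewrite !inE negb_or ij.
have [c3 S3 Ec] := adjE (cube_add ijA).2.
rewrite setUCA in Ec.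
have [c4 S4 Ed] := adjE (cube_add jA).2.
have n13 : phi A != phi (j |: (i |: A)).
  apply/eqP => /inj E; move: jA; by rewrite E !inE eqxx.
have n24 : phi (i |: A) != phi (j |: A).
  apply/eqP => /inj E; move: ijA; by rewrite -E !inE eqxx.
have [ac _ _] := SQ VS (pmphi _) (pmphi _) (pmphi _) (pmphi _) Ea Eb Ec Ed (csH_S i) S2 S3 S4 n13 n24.
by rewrite setUCA symdiffC Ec ac.
Qed.

Lemma hyp_good : good S (phi set0) csH.
Proof.
split; first exact: pmphi.
  by move=> i; exact: R2 (pmphi _) (pmphi _) (csH_E i) (csH_S i).
move=> i j ij v vi vj.
have ji : j \notin i |: set0 by rewrite !inE negb_or eq_sym ij.
have Eb := Kstep ji.
have ij' : i \notin j |: set0 by rewrite !inE negb_or ij.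
have [c3 S3 Ec] := adjE (cube_add ij').2.
rewrite setUCA in Ec.
have Ed : symdiff (phi (j |: set0)) (phi set0) = hex_edges (csH j) by rewrite symdiffC csH_E.
have n13 : phi set0 != phi (j |: (i |: set0)).
  apply/eqP => /inj /setP /(_ j); by rewrite !inE eqxx.
have n24 : phi (i |: set0) != phi (j |: set0).
  apply/eqP => /inj /setP /(_ i); by rewrite !inE eqxx (negbTE ij).
have [_ _ H] := SQ VS (pmphi _) (pmphi _) (pmphi _) (pmphi _) (csH_E i) Eb Ec Ed (csH_S i) (csH_S j) S3 (csH_S j) n13 n24.
exact: H vi vj.
Qed.

Lemma phi_eq : forall A, phi A = phiM (phi set0) csH A.
Proof.
have G := hyp_good.
apply: set_ind.
  apply/fsetP => e; rewrite phiME.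
  have -> : inA csH set0 e = false by apply/negbTE/existsP => -[i]; rewrite inE.
  by case: (e \in phi set0).
move=> A i iA IH; apply/fsetP => e.
have K := hexm (Kstep iA) e.
have -> : (e \in phi (i |: A)) = ((e \in phi A) != (e \in hex_edges (csH i))).
  by rewrite K; case: (e \in phi A); case: (e \in phi (i |: A)).
rewrite IH !phiME.
case he: [exists j, e \in hex_edges (csH j)]; last first.
  rewrite !inA_none; try exact: exF he.
  by rewrite (negbTE (exF he i)); case: (_ \in _).
case/existsP: he => j ej; rewrite !(inA_one G _ ej) !inE.
case: (i =P j) => [E|nij].
  subst j; by rewrite ej eqxx (negbTE iA); case: (_ \in _).
have -> : (e \in hex_edges (csH i)) = false.
  by apply/negP => ei; apply: nij; apply: (edisj G ei ej).
have -> : (j == i) = false by apply/eqP => E; apply: nij; rewrite E.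
by case: (_ \in phi set0); case: (j \in A).
Qed.

Lemma hyp_U : U = Uof (phi set0) csH.
Proof.
apply/fsetP => M; apply/idP/idP.
  case/memb => A <-; apply/(UofE (phi set0) csH); exists A; exact/esym/phi_eq.
case/(UofE (phi set0) csH) => A <-; apply/memb; exists A; exact/phi_eq.
Qed.
End Hyp.

Lemma hyp_rep (S : {fset cell}) (VS : {in S, forall c, valid_cell c}) U : hypercube_in S U ->
  exists n (M0 : {fset edge}) (cs : 'I_n -> cell), good S M0 cs /\ U = Uof M0 cs.
Proof.
case=> pmU [n [phi [inj memb adj]]].
exists n, (phi set0), (csH adj); split.
  exact: (hyp_good VS pmU inj memb adj).
exact: (hyp_U VS pmU inj memb adj).
Qed.

Lemma touch_of v e f : incident v e -> incident v f -> touch e f.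
Proof. by rewrite /touch /incident => /orP[]/eqP <- ->; rewrite ?orbT. Qed.

Lemma hE_neq_succ c k : hE c k != hE c k.+1.
Proof. by rewrite hE_eq; lia. Qed.

Lemma single_hex F c k : hex_edges c `<=` F -> ~ single_comp F (hE c k).
Proof.
move=> cF [_ H].
have v1 : incident (hV c k.+1) (hE c k) by rewrite inc_hE eqxx orbT.
have E := H (hE c k.+1) (fsubsetP cF _ (hex_hE _ _)) (touch_of v1 (inc_hV_self _ _)).
by move: (hE_neq_succ c k); rewrite E eqxx.
Qed.

Section ClarRep.
Variables (S : {fset cell}) (VS : {in S, forall c, valid_cell c}).
Variables (F : {fset edge}) (CF : clar_cover S F).

Lemma hc_disj c c' v : hex_comp S F c -> hex_comp S F c' ->
  v \in hex_vertices c -> v \in hex_vertices c' -> c = c'.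
Proof.
move=> [Sc cF clc] [Sc' cF' _] vc /hvP [k _ Ev]; subst v.
have h1 : hE c' k \in hex_edges c.
  apply: clc; first exact: (fsubsetP cF' _ (hex_hE _ _)).
  by exists (hV c' k) => //; apply: inc_hV_self.
have h2 : hE c' (k + 5) \in hex_edges c.
  apply: clc; first exact: (fsubsetP cF' _ (hex_hE _ _)).
  by exists (hV c' k) => //; apply: inc_hV_pred.
have ne : hE c' k != hE c' (k + 5) by rewrite hE_eq; lia.
exact: hex2 (VS Sc') (VS Sc) ne (hex_hE _ _) (hex_hE _ _) h1 h2.
Qed.

Definition HC := [fset c in S | pb (hex_comp S F c)].
Lemma HCE c : c \in HC <-> hex_comp S F c.
Proof.
rewrite !inE; split; first by case/andP => _ /pbP.
by move=> H; apply/andP; split; [case: H | apply/pbP].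
Qed.

Definition nH := size HC.
Definition csC (i : 'I_nH) : cell := nth (0%R, 0%R) HC i.

Lemma csC_hc i : hex_comp S F (csC i).
Proof. apply/HCE; exact: mem_nth. Qed.

Lemma hc_csC c : hex_comp S F c -> exists i, csC i = c.
Proof.
move/HCE => cH; have Hi : index c HC < nH by rewrite /nH index_mem.
by exists (Ordinal Hi); rewrite /csC nth_index.
Qed.

Lemma csC_inj i j : csC i = csC j -> i = j.
Proof.
move=> /eqP; rewrite /csC nth_uniq ?fset_uniq //; first by move/eqP/val_inj.
Qed.

Definition pT c e := [exists k : 'I_6, ~~ odd k && (e == hE c k)].
Definition M0C := [fset e in F | pb (single_comp F e) || [exists i, pT (csC i) e]].

Lemma M0CE e : (e \in M0C) = (e \in F) && (pb (single_comp F e) || [exists i, pT (csC i) e]).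
Proof. by rewrite !inE. Qed.

Lemma resC i : resonant S M0C (csC i).
Proof.
have [Sc cF clc] := csC_hc i.
split => //; exists false => k; rewrite M0CE (fsubsetP cF _ (hex_hE _ _)) /=.
case ok: (odd k) => /=.
  apply/negbTE; rewrite negb_or; apply/andP; split.
    by apply/negP => /pbP; apply: single_hex cF.
  apply/negP => /existsP [j /existsP [l /andP [ol /eqP E]]].
  have vj : hV (csC i) k \in hex_vertices (csC j).
    by apply: (inc_vert (e := hE (csC i) k)); [rewrite E hex_hE | exact: inc_hV_self].
  have cij := hc_disj (csC_hc i) (csC_hc j) (hex_hV _ k) vj.
  move: E; rewrite -cij => /eqP; rewrite hE_eq => /eqP E.
  by move: ol; rewrite -odd_mod6 -E odd_mod6 ok.
apply/orP; right; apply/existsP; exists i; apply/existsP.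
have Hk : (k %% 6 < 6)%N by rewrite ltn_mod.
exists (Ordinal Hk); by rewrite /= odd_mod6 ok hE_mod eqxx.
Qed.

Lemma single_uniq e f v : single_comp F e -> f \in F -> incident v e -> incident v f -> f = e.
Proof. by case=> _ H fF ve vf; apply: H fF (touch_of ve vf). Qed.

Lemma pmC : perfect_matching S M0C.
Proof.
have [CE CV CC] := CF.
have M0F : forall e, e \in M0C -> e \in F by move=> e; rewrite M0CE => /andP[].
have inhex : forall e, e \in M0C -> ~ single_comp F e -> exists i, e \in hex_edges (csC i).
  move=> e; rewrite M0CE => /andP[_ /orP[/pbP //|/existsP [i /existsP [k /andP[_ /eqP ->]]]]] _.
  by exists i; apply: hex_hE.
apply: pmI.
- by move=> e /M0F /CE.
- move=> v Hv; have [e eF ve] := CV v Hv.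
  case: (CC e eF) => [se|[c hc ec]].
    by exists e => //; rewrite M0CE eF; apply/orP; left; apply/pbP.
  have [i Ei] := hc_csC hc; subst c.
  have [f fM /andP[_ vf]] := res_at (resC i) (inc_vert ec ve); by exists f.
- move=> v e f eM fM ve vf.
  case: (excluded_middle_informative (single_comp F e)) => [se|nse].
    exact/esym/(single_uniq se (M0F _ fM) ve vf).
  case: (excluded_middle_informative (single_comp F f)) => [sf|nsf].
    exact: (single_uniq sf (M0F _ eM) vf ve).
  have [i ei] := inhex e eM nse; have [j fj] := inhex f fM nsf.
  have vi := inc_vert ei ve; have vj := inc_vert fj vf.
  have cij := hc_disj (csC_hc i) (csC_hc j) vi vj.
  rewrite -cij in fj.
  have /hvP [k _ Ev] := vi; subst v.
  exact: res_uniq_hex (resC i) eM fM ei fj ve vf.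
Qed.

Lemma goodC : good S M0C csC.
Proof.
split; [exact: pmC | exact: resC |].
move=> i j ij v vi vj; move: ij.
by rewrite (csC_inj (hc_disj (csC_hc i) (csC_hc j) vi vj)) eqxx.
Qed.

Lemma F_ofC : F = F_of M0C csC.
Proof.
have [CE CV CC] := CF.
apply/fsetP => e; rewrite F_ofE; apply/idP/idP => [eF|].
  case: (CC e eF) => [se|[c hc ec]].
    by rewrite M0CE eF; apply/orP; left; apply/orP; left; apply/pbP.
  have [i Ei] := hc_csC hc; subst c.
  by apply/orP; right; apply/existsP; exists i.
case/orP => [|/existsP [i ei]]; first by rewrite M0CE => /andP[].
by have [_ cF _] := csC_hc i; apply: (fsubsetP cF).
Qed.
End ClarRep.

Lemma clar_rep (S : {fset cell}) (VS : {in S, forall c, valid_cell c}) F : clar_cover S F ->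
  exists n (M0 : {fset edge}) (cs : 'I_n -> cell), good S M0 cs /\ F = F_of M0 cs.
Proof.
move=> CF; have G := goodC VS CF; have E := F_ofC CF.
by do 3 eexists; split; [exact: G | exact: E].
Qed.

Lemma touch_hE c k f : touch (hE c k) f = incident (hV c k) f || incident (hV c k.+1) f.
Proof.
rewrite -(hE_mod c k) -(hV_mod c k) -(hV_mod c k.+1).
have : k %% 6 < 6 by rewrite ltn_mod.
have -> : (k.+1 %% 6 = (k %% 6).+1 %% 6)%N by rewrite -addn1 -[in RHS]addn1 modnDml.
case: (k %% 6)%N => [|[|[|[|[|[|k']]]]]] // _; rewrite /touch /hE /hV /= ?add11 //; by rewrite orbC.
Qed.

Lemma touch_hEE c i j : touch (hE c i) (hE c j) =
  [|| (i %% 6 == j %% 6)%N, (i %% 6 == j.+1 %% 6)%N, (i.+1 %% 6 == j %% 6)%N | (i.+1 %% 6 == j.+1 %% 6)%N].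
Proof. by rewrite touch_hE !inc_hVE !orbA. Qed.

Lemma triple_par c i j l : i < 6 -> j < 6 -> l < 6 ->
  ~~ touch (hE c i) (hE c j) -> ~~ touch (hE c i) (hE c l) -> ~~ touch (hE c j) (hE c l) ->
  forall k, k < 6 -> odd k = odd i -> [\/ k = i, k = j | k = l].
Proof.
rewrite !touch_hEE.
case: i => [|[|[|[|[|[|i]]]]]] //; case: j => [|[|[|[|[|[|j]]]]]] //;
case: l => [|[|[|[|[|[|l]]]]]] // _ _ _ /= H1 H2 H3 k;
case: k => [|[|[|[|[|[|k]]]]]] //= _ _; by [constructor 1|constructor 2|constructor 3].
Qed.

Lemma max_of_clar (S : {fset cell}) (VS : {in S, forall c, valid_cell c}) F :
  clar_cover S F -> ~ alternating_hex S F -> maximal_hypercube S (UF S F).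
Proof.
move=> CF NA.
have [n [M0 [cs [G EF]]]] := clar_rep VS CF.
have hyp : hypercube_in S (UF S F).
  rewrite EF (UF_Uof G); exact (G_hyp VS G).
split => //; case=> U' [HU' lt].
have [n' [M0' [cs' [G' EU']]]] := hyp_rep VS HU'.
have M0F : M0 `<=` F by rewrite EF; apply/fsubsetP => e eM; rewrite F_ofE eM.
have pM0 := pm0 G.
have inU : forall M, M `<=` F -> perfect_matching S M -> exists A, phiM M0' cs' A = M.
  move=> M MF pM; have : M \in U' by apply: (fsubsetP (fproper_sub lt)); apply/UFE.
  by rewrite EU' => /(UofE M0' cs').
have [A0 EA0] := inU M0 M0F pM0.
have [M' M'U' M'nU] : exists2 M', M' \in U' & M' \notin UF S F.
  by apply/fsubsetPn; move: lt; rewrite fproperE => /andP[].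
move: M'U'; rewrite EU' => /(UofE M0' cs') [B EB].
have [e eM' eF] : exists2 e, e \in M' & e \notin F.
  apply/fsubsetPn; apply/negP => M'F; move/negP: M'nU; apply; apply/UFE; split => //.
  rewrite -EB; exact: G_pm G' B.
have eM0 : e \notin M0 by apply/negP => /(fsubsetP M0F); rewrite (negbTE eF).
have : inA cs' B e != inA cs' A0 e.
  move: eM' eM0; rewrite -EB -EA0 !phiME.
  by case: (e \in M0'); case: (inA cs' B e); case: (inA cs' A0 e).
case he: [exists j, e \in hex_edges (cs' j)]; last by rewrite !inA_none //; exact: exF he.
case/existsP: he => j ej; rewrite !(inA_one G' _ ej) => jBA.
set d := cs' j.
have rd : resonant S M0 d by rewrite -EA0; exact: res_phi G' A0 j.
have [Sd [b Hb]] := rd.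
have [CE CV CC] := CF.
have sing : forall k, odd k = b -> single_comp F (hE d k).
  move=> k ok; have kM : hE d k \in M0 by rewrite Hb ok eqxx.
  case: (CC _ (fsubsetP M0F _ kM)) => // [[c' hc' kc']].
  exfalso.
  have rc' := hexcomp_res pM0 M0F hc'.
  have pX := R1 pM0 rc'.
  have XF : symdiff M0 (hex_edges c') `<=` F.
    apply/fsubsetP => g; rewrite symdiffE; case gM: (g \in M0) => /= H.
      exact: (fsubsetP M0F).
    by case: hc' => _ cF _; apply: (fsubsetP cF); move: H; rewrite negbK.
  have [B' EB'] := inU _ XF pX.
  have key : forall g, (g \in hex_edges c') = (inA cs' A0 g != inA cs' B' g).
    move=> g; have := congr1 (fun X => g \in X) EB'; rewrite /= symdiffE -EA0 !phiME => E.
    move: E; case: (g \in M0'); case: (inA cs' A0 g); case: (inA cs' B' g);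
      case: (g \in hex_edges c') => //=.
  have jAB : (j \in A0) != (j \in B').
    by move: kc'; rewrite key !(inA_one G' _ (hex_hE _ _)).
  have : e \in hex_edges c' by rewrite key !(inA_one G' _ ej).
  by case: hc' => _ cF _ /(fsubsetP cF); rewrite (negbTE eF).
apply: NA; exists d; split => //.
  by case=> _ cF _; move: (fsubsetP cF _ ej); rewrite (negbTE eF).
exists (hE d b), (hE d (b + 2)), (hE d (b + 4)).
split; try exact: hex_hE.
  by rewrite !touch_hEE; case: (b).
by split; [|split]; apply: sing; rewrite ?oddD /=; case: (b).
Qed.

Lemma clar_of_max (S : {fset cell}) (VS : {in S, forall c, valid_cell c}) U :
  maximal_hypercube S U -> exists F, [/\ clar_cover S F, ~ alternating_hex S F & UF S F = U].
Proof.
case=> HU NM.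
have [n [M0 [cs [G EU]]]] := hyp_rep VS HU.
exists (F_of M0 cs); split; first exact: F_clar G.
  2: by rewrite (UF_Uof G) EU.
case=> d [Sd nhc [e1 [e2 [e3 [h1 h2 h3 [t12 [t13 t23]] [s1 [s2 s3]]]]]]].
set F := F_of M0 cs.
have pM0 := pm0 G.
have hexF : forall i, hex_edges (cs i) `<=` F by move=> i; case: (F_hexcomp G i).
have notH : forall e, single_comp F e -> forall i, e \notin hex_edges (cs i).
  move=> e se i; apply/negP => /hexP [m _ Em]; rewrite Em in se.
  exact: single_hex (hexF i) se.
have inM0 : forall e, single_comp F e -> e \in M0.
  move=> e se; have := se.1; rewrite F_ofE => /orP[//|/existsP [i ei]].
  by move: (notH e se i); rewrite ei.
case/hexP: h1 => k1 K1 E1; case/hexP: h2 => k2 K2 E2; case/hexP: h3 => k3 K3 E3.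
rewrite E1 E2 E3 in t12 t13 t23 s1 s2 s3.
set b := odd k1.
have par : forall k, odd k = b -> single_comp F (hE d k).
  move=> k ok; rewrite -hE_mod.
  have := triple_par K1 K2 K3 t12 t13 t23 (ltn_mod k 6); rewrite odd_mod6 ok.
  by case/(_ erefl) => ->.
have Hb : forall k, (hE d k \in M0) = (odd k == b).
  move=> k; case ok: (odd k == b); first by apply: inM0; apply: par; apply/eqP.
  apply/negP => kM.
  have okS : odd k.+1 = b by move/negbT: ok; rewrite /= ; case: (odd k); case: (b).
  have kM' := inM0 _ (par _ okS).
  have v1 : incident (hV d k.+1) (hE d k) by rewrite inc_hE eqxx orbT.
  have := pm_uniq pM0 kM kM' v1 (inc_hV_self _ _).
  by move/eqP; rewrite (negbTE (hE_neq_succ d k)).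
have rdd : resonant S M0 d by split => //; exists b.
have vdj : forall j v, v \in hex_vertices d -> v \in hex_vertices (cs j) -> False.
  move=> j v vd vj.
  have [f fM /andP [fd vf]] := res_at rdd vd.
  have sf : single_comp F f.
    by case/hexP: fd fM => m _ ->; rewrite Hb => /eqP; apply: par.
  case/hvP: vj => m _ Ev; subst v.
  have gF : hE (cs j) m \in F by apply: (fsubsetP (hexF j)); apply: hex_hE.
  have := single_uniq sf gF vf (inc_hV_self _ _) => Eg.
  by move: (notH f sf j); rewrite -Eg hex_hE.
pose cs2 (i : 'I_(n + 1)) : cell := match split i with inl j => cs j | inr _ => d end.
have G2 : good S M0 cs2.
  split => // [i|i i' ii' v].
    by rewrite /cs2; case: (split i) => [j|_]; [exact: res0 G j | exact: rdd].
  rewrite /cs2; case Ei: (split i) => [j|x]; case Ei': (split i') => [j'|x'] vi vj.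
  - have E := vdisj G vi vj; subst j'.
    by move: ii'; rewrite -(splitK i) -(splitK i') Ei Ei' eqxx.
  - exact: vdj vj vi.
  - exact: vdj vi vj.
  - by move: ii'; rewrite -(splitK i) -(splitK i') Ei Ei' (ord1 x) (ord1 x') eqxx.
have F2E : forall e, e \in F -> e \in F_of M0 cs2.
  move=> e; rewrite !F_ofE => /orP[->//|/existsP [i ei]].
  apply/orP; right; apply/existsP; exists (unsplit (inl i)); by rewrite /cs2 unsplitK.
apply: NM; exists (Uof M0 cs2); split; first exact (G_hyp VS G2).
rewrite fproperE; apply/andP; split.
  apply/fsubsetP => M; rewrite EU -(UF_Uof G) -(UF_Uof G2) => /UFE [MF pM]; apply/UFE.
  split => //; apply/fsubsetP => e /(fsubsetP MF); exact: F2E.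
apply/fsubsetPn; exists (symdiff M0 (hex_edges d)).
  rewrite -(UF_Uof G2); apply/UFE; split; last exact: R1 pM0 rdd.
  apply/fsubsetP => e; rewrite symdiffE F_ofE; case: (e \in M0) => //= ed.
  apply/existsP; exists (unsplit (inr ord0)).
  by rewrite /cs2 unsplitK; move: ed; rewrite negbK.
rewrite EU -(UF_Uof G); apply/negP => /UFE [XF _].
set k0 : nat := ~~ b.
have ok0 : odd k0 = ~~ b by rewrite /k0; case: (b).
have inX : hE d k0 \in symdiff M0 (hex_edges d) by rewrite symdiffE Hb hex_hE ok0; case: (b).
have okS : odd k0.+1 = b by rewrite /= ok0 negbK.
have v1 : incident (hV d k0.+1) (hE d k0) by rewrite inc_hE eqxx orbT.
have := single_uniq (par _ okS) (fsubsetP XF _ inX) (inc_hV_self _ _) v1.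
by move/eqP; rewrite (negbTE (hE_neq_succ d k0)).
Qed.

Lemma UF_sub (S : {fset cell}) (VS : {in S, forall c, valid_cell c}) F1 F2 :
  clar_cover S F1 -> UF S F1 = UF S F2 -> F1 `<=` F2.
Proof.
move=> C1 E; have [n [M0 [cs [G EF]]]] := clar_rep VS C1.
apply/fsubsetP => e eF.
have eF' : e \in F_of M0 cs by rewrite -EF.
have [M MU eM] := F_cover G eF'.
move: MU; rewrite -(UF_Uof G) -EF E => /UFE [MF _].
exact: (fsubsetP MF).
Qed.

Lemma UF_inj (S : {fset cell}) (VS : {in S, forall c, valid_cell c}) F1 F2 :
  clar_cover S F1 -> clar_cover S F2 -> UF S F1 = UF S F2 -> F1 = F2.
Proof.
move=> C1 C2 E; apply/eqP; rewrite eqEfsubset.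
by rewrite (UF_sub VS C1 E) (UF_sub VS C2 (esym E)).
Qed.

Lemma sig_eq (T : Type) (P : T -> Prop) (u v : {x | P x}) : proj1_sig u = proj1_sig v -> u = v.
Proof.
case: u v => x p [y q] /= E; subst y.
by rewrite (proof_irrelevance _ p q).
Qed.

Theorem corollary3 (S : {fset cell}) :
  hexagonal_system S -> kekulean S ->
  exists f : {U : {fset {fset edge}} | maximal_hypercube S U} ->
             {F : {fset edge} | clar_cover S F /\ ~ alternating_hex S F},
    bijective f.
Proof.
case=> _ VS _ _ _.
have surj : forall U : {U : {fset {fset edge}} | maximal_hypercube S U},
    {F : {fset edge} | (clar_cover S F /\ ~ alternating_hex S F) /\ UF S F = proj1_sig U}.
  move=> U; apply: constructive_indefinite_description.
  have [F [C NA E]] := clar_of_max VS (proj2_sig U).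
  by exists F.
pose f U : {F : {fset edge} | clar_cover S F /\ ~ alternating_hex S F} :=
  exist _ (proj1_sig (surj U)) (proj1 (proj2_sig (surj U))).
have gP : forall F : {F : {fset edge} | clar_cover S F /\ ~ alternating_hex S F},
    maximal_hypercube S (UF S (proj1_sig F)).
  by move=> [F [C NA]]; exact (max_of_clar VS C NA).
pose g F : {U : {fset {fset edge}} | maximal_hypercube S U} := exist _ _ (gP F).
exists f; apply: (Bijective (g := g)).
- move=> U; apply: sig_eq => /=.
  exact: (proj2 (proj2_sig (surj U))).
- move=> F; apply: sig_eq => /=.
  have [[C1 _] E1] := proj2_sig (surj (g F)).
  apply: (UF_inj VS C1 (proj1 (proj2_sig F))).
  by rewrite E1.
Qed.
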